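(* Let $\mathcal{A}$ and $\mathcal{B}$ be alternative $W^{*}$-factors with identities $1_{\mathcal{A}},1_{\mathcal{B}}$, with $\mathcal{A}$ containing a projection $p\notin\{0,1_{\mathcal{A}}\}$, and let $\Phi:\mathcal{A}\to\mathcal{B}$ be a bijection satisfying $\Phi(ab-ba^{*})=\Phi(a)\Phi(b)-\Phi(b)\Phi(a)^{*}$ for all $a,b\in\mathcal{A}$. Then either $\Phi(ia)=i\Phi(a)$ for all $a\in\mathcal{A}$, or $\Phi(ia)=-i\Phi(a)$ for all $a\in\mathcal{A}$.
   Context: An alternative $W^{*}$-factor is a prime alternative $C^{*}$-algebra (complete normed alternative complex $\ast$-algebra with $\|a^{*}a\|=\|a\|^{2}$, where alternative means $a^{2}b=a(ab)$, $ba^{2}=(ba)a$) that is a dual Banach space; it is unital with center $\mathbb{C}1$. A projection is a nonzero self-adjoint idempotent. *)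

(* Defs.v *)
From HB Require Import structures.
From mathcomp Require Import all_boot all_order all_algebra.
From mathcomp Require Import complex.
From mathcomp Require Import Rstruct.
Set Implicit Arguments. Unset Strict Implicit. Unset Printing Implicit Defensive.
Import Order.TTheory GRing.Theory Num.Theory.
Local Open Scope ring_scope.

Notation RR := Rdefinitions.R.
Notation CC := (complex Rdefinitions.R).

Definition cmod (c : CC) : RR := Normc.normc c.

(* It is unital (a standard fact, recorded in the context); the unit is part of
   the data. *)
Record AltWFactor := {
  wf_sort :> lmodType CC;
  wf_mul : wf_sort -> wf_sort -> wf_sort;
  wf_one : wf_sort;
  wf_star : wf_sort -> wf_sort;
  wf_norm : wf_sort -> RR;
  wf_mulDl : forall a b c, wf_mul (a + b) c = wf_mul a c + wf_mul b c;
  wf_mulDr : forall a b c, wf_mul a (b + c) = wf_mul a b + wf_mul a c;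
  wf_mulZl : forall (k : CC) a b, wf_mul (k *: a) b = k *: wf_mul a b;
  wf_mulZr : forall (k : CC) a b, wf_mul a (k *: b) = k *: wf_mul a b;
  wf_altl : forall a b, wf_mul (wf_mul a a) b = wf_mul a (wf_mul a b);
  wf_altr : forall a b, wf_mul b (wf_mul a a) = wf_mul (wf_mul b a) a;
  wf_mul1l : forall a, wf_mul wf_one a = a;
  wf_mul1r : forall a, wf_mul a wf_one = a;
  wf_starK : forall a, wf_star (wf_star a) = a;
  wf_starD : forall a b, wf_star (a + b) = wf_star a + wf_star b;
  wf_starZ : forall (k : CC) a, wf_star (k *: a) = (Num.conj k) *: wf_star a;
  wf_starM : forall a b, wf_star (wf_mul a b) = wf_mul (wf_star b) (wf_star a);
  wf_norm_ge0 : forall a, 0 <= wf_norm a;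
  wf_norm_eq0 : forall a, wf_norm a = 0 -> a = 0;
  wf_normD : forall a b, wf_norm (a + b) <= wf_norm a + wf_norm b;
  wf_normZ : forall (k : CC) a, wf_norm (k *: a) = cmod k * wf_norm a;
  wf_normM : forall a b, wf_norm (wf_mul a b) <= wf_norm a * wf_norm b;
  wf_normC : forall a, wf_norm (wf_mul (wf_star a) a) = wf_norm a ^+ 2;
  wf_complete : forall u : nat -> wf_sort,
      (forall e : RR, 0 < e -> exists N, forall m n, (N <= m)%N -> (N <= n)%N ->
          wf_norm (u m - u n) < e) ->
      exists l, forall e : RR, 0 < e -> exists N, forall n, (N <= n)%N ->
          wf_norm (u n - l) < e;
  wf_prime : forall I J : wf_sort -> Prop,
      (I 0 /\ (forall a b, I a -> I b -> I (a + b)) /\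
         (forall (k : CC) a, I a -> I (k *: a)) /\
         (forall a x, I a -> I (wf_mul x a) /\ I (wf_mul a x))) ->
      (J 0 /\ (forall a b, J a -> J b -> J (a + b)) /\
         (forall (k : CC) a, J a -> J (k *: a)) /\
         (forall a x, J a -> J (wf_mul x a) /\ J (wf_mul a x))) ->
      (forall a b, I a -> J b -> wf_mul a b = 0) ->
      (forall a, I a -> a = 0) \/ (forall b, J b -> b = 0);
  (* dual Banach space: A is isometrically isomorphic (via a linear bijection
     e) to the Banach dual X* of some complex normed space (X, nX); the norm of
     e a is the operator norm sup_{nX x <= 1} |e a x|. *)
  wf_dual : exists (X : lmodType CC) (nX : X -> RR) (e : wf_sort -> X -> CC),
      [/\ (forall x, 0 <= nX x) /\ (forall x, nX x = 0 -> x = 0) /\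
          (forall x y, nX (x + y) <= nX x + nX y) /\
          (forall (k : CC) x, nX (k *: x) = cmod k * nX x),
        (forall a, linear (e a)),
        (forall (k : CC) a b x, e (k *: a + b) x = k * e a x + e b x),
        (forall a, (forall x, nX x <= 1 -> cmod (e a x) <= wf_norm a) /\
           (forall M : RR, (forall x, nX x <= 1 -> cmod (e a x) <= M) ->
              wf_norm a <= M))
      & (forall f : X -> CC, linear f ->
           (exists M : RR, forall x, cmod (f x) <= M * nX x) ->
           exists a, forall x, e a x = f x)]
}.

Definition is_projection (A : AltWFactor) (p : A) :=
  [/\ p <> 0, wf_star p = p & wf_mul p p = p].

(* Main.v *)
Require Import Defs.
From HB Require Import structures.
From mathcomp Require Import all_boot all_order all_algebra.
From mathcomp Require Import complex.
From mathcomp Require Import ring Rstruct.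
Import GRing.Theory Num.Theory.
Local Open Scope ring_scope.

Lemma c1 : Num.conj ('i%C : CC) = - 'i%C.
Proof. by rewrite conjCi. Qed.
Lemma c2 : ('i%C : CC) * 'i%C = -1.
Proof. by rewrite -expr2 sqr_i. Qed.
Lemma c4 : ('i%C / 2 : CC) - Num.conj ('i%C / 2) = 'i%C.
Proof. rewrite rmorphM fmorphV /= c1 rmorph_nat. by field. Qed.
Lemma ci0 : ('i%C : CC) != 0.
Proof.
apply/eqP => h; have := c2; rewrite h mul0r => /eqP.
by rewrite eq_sym oppr_eq0 oner_eq0.
Qed.
Lemma c5 : cmod 0 = 0.
Proof. by rewrite /cmod /Normc.normc /= expr0n /= addr0 sqrtr0. Qed.
Lemma c6 : (2 : CC) != 0.
Proof. by rewrite pnatr_eq0. Qed.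

Lemma n1 : (1 : CC) != -1.
Proof. by rewrite -subr_eq0 opprK -mulr2n c6. Qed.
Lemma ni : ('i%C : CC) != - 'i%C.
Proof.
rewrite -subr_eq0 opprK -mulr2n -mulr_natr mulf_eq0 negb_or ci0 /=.
by rewrite c6.
Qed.
Lemma halfeq (V : lmodType CC) (d : V) : d = - d -> d = 0.
Proof.
move=> h. have : (2 : CC) *: d = 0.
  by rewrite scaler_nat mulr2n {1}h addNr.
by move/eqP; rewrite scaler_eq0 (negbTE c6) /= => /eqP.
Qed.

Lemma half2 (V : lmodType CC) (P Q a b : V) :
  P - Q = a - b -> P + Q = a + b -> P = a.
Proof.
move=> h1 h2.
have hP : P = a - b + Q by rewrite -h1 subrK.
have hQ : Q - b = - (Q - b).
  apply/eqP; rewrite -subr_eq0 opprK; apply/eqP.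
  move: h2; rewrite hP => /eqP; rewrite -subr_eq0 => /eqP <-.
  by rewrite opprD !addrA [a - b + Q + Q - a]addrC !addrA addNr add0r (addrC (- b) Q).
have := @halfeq _ _ hQ; move/eqP; rewrite subr_eq0 => /eqP hQb.
by rewrite hP hQb subrK.
Qed.

Section Basic.
Variable B : AltWFactor.
Local Notation m := (@wf_mul B).
Local Notation s := (@wf_star B).

Lemma wmul0l (b : B) : m 0 b = 0.
Proof. by have := wf_mulZl 0 0 b; rewrite !scale0r. Qed.
Lemma wmul0r (b : B) : m b 0 = 0.
Proof. by have := wf_mulZr 0 b 0; rewrite !scale0r. Qed.
Lemma wmulNl (a b : B) : m (- a) b = - m a b.
Proof. by rewrite -scaleN1r wf_mulZl scaleN1r. Qed.
Lemma wmulNr (a b : B) : m a (- b) = - m a b.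
Proof. by rewrite -scaleN1r wf_mulZr scaleN1r. Qed.
Lemma wmulBl (a b c : B) : m (a - b) c = m a c - m b c.
Proof. by rewrite wf_mulDl wmulNl. Qed.
Lemma wmulBr (a b c : B) : m c (a - b) = m c a - m c b.
Proof. by rewrite wf_mulDr wmulNr. Qed.
Lemma star1 : s (wf_one B) = wf_one B.
Proof.
have h : s (wf_one B) = m (s (wf_one B)) (wf_one B) by rewrite wf_mul1r.
have := congr1 s h. by rewrite wf_starM !wf_starK wf_mul1r => <-.
Qed.
Lemma starN (a : B) : s (- a) = - s a.
Proof. by rewrite -scaleN1r wf_starZ conjCN1 scaleN1r. Qed.
Lemma starB (a b : B) : s (a - b) = s a - s b.
Proof. by rewrite wf_starD starN. Qed.
Lemma norm0 : wf_norm (0 : B) = 0.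
Proof. by have := wf_normZ 0 (0 : B); rewrite scale0r c5 mul0r. Qed.

Lemma ideal_ok (T : B -> B) (k : CC) :
  (forall x y, T (x + y) = T x + T y) ->
  (forall (c : CC) x, T (c *: x) = c *: T x) ->
  (forall x y, T (m x y) = m x (T y)) ->
  (forall x y, T (m x y) = m (T x) y) ->
  let I := fun x => T x = k *: x in
  (I 0 /\ (forall a b, I a -> I b -> I (a + b)) /\
         (forall (c : CC) a, I a -> I (c *: a)) /\
         (forall a x, I a -> I (m x a) /\ I (m a x))).
Proof.
move=> TD TZ TL TR I; rewrite /I; split; last split; last split.
- by have := TZ 0 0; rewrite !scale0r => ->; rewrite scaler0.
- by move=> a b ha hb; rewrite TD ha hb scalerDr.
- by move=> c a ha; rewrite TZ ha !scalerA mulrC.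
- move=> a x ha; split.
  + by rewrite TL ha wf_mulZr.
  + by rewrite TR ha wf_mulZl.
Qed.

Lemma prod_zero (T : B -> B) (k l : CC) a b :
  (forall x y, T (m x y) = m x (T y)) ->
  (forall x y, T (m x y) = m (T x) y) ->
  k != l -> T a = k *: a -> T b = l *: b -> m a b = 0.
Proof.
move=> TL TR kl ha hb.
have h1 := TL a b; have h2 := TR a b.
rewrite hb wf_mulZr in h1; rewrite ha wf_mulZl h1 in h2.
have : (k - l) *: m a b = 0 by rewrite scalerBl h2 subrr.
by move/eqP; rewrite scaler_eq0 subr_eq0 (negbTE kl) /= => /eqP.
Qed.

End Basic.

Theorem lemma2p9 (A B : AltWFactor) (p : A)
  (hp : is_projection p) (hp1 : p <> wf_one A)
  (Phi : A -> B) (hbij : bijective Phi)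
  (hPhi : forall a b : A,
     Phi (wf_mul a b - wf_mul b (wf_star a)) =
     wf_mul (Phi a) (Phi b) - wf_mul (Phi b) (wf_star (Phi a))) :
  (forall a : A, Phi ('i%C *: a) = 'i%C *: Phi a) \/
  (forall a : A, Phi ('i%C *: a) = - ('i%C *: Phi a)).
Proof.
case: hbij => Pinv _ hPP.
pose c : CC := 'i%C / 2.
pose x0 : A := c *: wf_one A.
pose e := Phi x0.
pose Psi (Y : B) := wf_mul e Y - wf_mul Y (wf_star e).
have HPi : forall a, Phi ('i%C *: a) = Psi (Phi a).
  move=> a; rewrite /Psi /e -hPhi; congr Phi.
  rewrite /x0 wf_mulZl wf_mul1l wf_starZ star1 wf_mulZr wf_mul1r -scalerBl.
  by rewrite c4.
have PsiD : forall X Y, Psi (X + Y) = Psi X + Psi Y.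
  move=> X Y; rewrite /Psi wf_mulDr wf_mulDl opprD !addrA; congr (_ + _).
  by rewrite addrAC.
have PsiZ : forall (k : CC) X, Psi (k *: X) = k *: Psi X.
  by move=> k X; rewrite /Psi wf_mulZr wf_mulZl scalerBr.
have PsiN : forall X, Psi (- X) = - Psi X.
  by move=> X; rewrite -scaleN1r PsiZ scaleN1r.
have PsiB : forall X Y, Psi (X - Y) = Psi X - Psi Y.
  by move=> X Y; rewrite PsiD PsiN.
have HP : forall X Y, Psi (wf_mul X Y - wf_mul Y (wf_star X)) =
                      wf_mul X (Psi Y) - wf_mul (Psi Y) (wf_star X).
  move=> X Y; rewrite -(hPP X) -(hPP Y) -hPhi -HPi -HPi -hPhi; congr Phi.
  by rewrite scalerBr wf_mulZr wf_mulZl.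
have Hg : Psi (wf_one B) = e - wf_star e by rewrite /Psi wf_mul1r wf_mul1l.
clearbody Psi.
set g := Psi (wf_one B).
have sg : wf_star g = - g by rewrite /g Hg starB wf_starK opprB.
have hA : forall X, Psi (X - wf_star X) = wf_mul X g - wf_mul g (wf_star X).
  by move=> X; have := HP X (wf_one B); rewrite wf_mul1r wf_mul1l.
have hB : forall X, Psi X = wf_mul X g /\ Psi (wf_star X) = wf_mul g (wf_star X).
  move=> X; have ha := hA X; have hb := hA ('i%C *: X).
  rewrite wf_starZ c1 wf_mulZl wf_mulZr !scaleNr !opprK -!scalerDr PsiZ PsiD in hb.
  have {}hb := scalerI ci0 hb.
  rewrite PsiB in ha.
  split; first exact: half2 ha hb.
  rewrite addrC [X in _ = X]addrC in hb.
  apply: half2 hb; rewrite -opprB ha opprB. done.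
have PsiL : forall X, Psi X = wf_mul g X.
  by move=> X; rewrite -(wf_starK X); case: (hB (wf_star X)).
have PsiR : forall X, Psi X = wf_mul X g by move=> X; case: (hB X).
have gL : forall X Y, wf_mul g (wf_mul X Y) = wf_mul X (wf_mul g Y).
  move=> X Y; rewrite -!PsiL.
  have ha := HP X Y; have hb := HP ('i%C *: X) Y.
  rewrite wf_starZ c1 !wf_mulZl !wf_mulZr !scaleNr !opprK -!scalerDr PsiZ PsiD in hb.
  have {}hb := scalerI ci0 hb.
  rewrite PsiB in ha.
  exact: half2 ha hb.
have gR : forall X Y, wf_mul g (wf_mul X Y) = wf_mul (wf_mul g X) Y.
  move=> X Y; have := congr1 (@wf_star B) (gL (wf_star Y) (wf_star X)).
  rewrite !wf_starM !wf_starK sg !wmulNr wmulNl.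
  by rewrite -!PsiR !PsiL; exact: oppr_inj.
pose T x := wf_mul g (wf_mul g x).
have TD : forall x y, T (x + y) = T x + T y by move=> x y; rewrite /T !wf_mulDr.
have TZ : forall (k : CC) x, T (k *: x) = k *: T x by move=> k x; rewrite /T !wf_mulZr.
have TL : forall x y, T (wf_mul x y) = wf_mul x (T y) by move=> x y; rewrite /T (gL x y) (gL x (wf_mul g y)).
have TR : forall x y, T (wf_mul x y) = wf_mul (T x) y by move=> x y; rewrite /T (gR x y) (gR (wf_mul g x) y).
have TN : forall x, T (- x) = - T x by move=> x; rewrite -scaleN1r TZ scaleN1r.
have gPhi : forall a, wf_mul g (Phi a) = Phi ('i%C *: a) by move=> a; rewrite HPi PsiL.
have T2 : forall y, T (T y) = y.
  move=> y; rewrite -(hPP y) /T !gPhi !scalerA.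
  by rewrite c2 -mulrA c2 mulrNN mulr1 scale1r.
have [I1|J1] := @wf_prime B (fun x => T x = 1 *: x) (fun x => T x = -1 *: x)
  (@ideal_ok B T 1 TD TZ TL TR) (@ideal_ok B T (-1) TD TZ TL TR)
  (fun a b ha hb => @prod_zero B T 1 (-1) a b TL TR n1 ha hb); last first.
  have Tx : forall x, T x = x.
    move=> x; have h : x - T x = 0.
      by apply: J1; rewrite TD TN T2 scaleN1r opprB.
    by apply/eqP; rewrite eq_sym -subr_eq0 h.
  have gg : wf_mul g g = wf_one B.
    by have := Tx (wf_one B); rewrite /T wf_mul1r.
  have hw : wf_mul (wf_star (g - wf_one B)) (g - wf_one B) = 0.
    rewrite starB sg star1 wmulBl wmulNl !wmulBr gg wf_mul1r !wf_mul1l.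
    by rewrite opprB subrr.
  have hn := wf_normC (g - wf_one B).
  rewrite hw norm0 in hn; move/esym/eqP: hn; rewrite sqrf_eq0 => hn.
  have hg1 : g = wf_one B.
    by apply/eqP; rewrite -subr_eq0; apply/eqP; apply: wf_norm_eq0; apply/eqP.
  have h10 : wf_one B = 0.
    by apply: halfeq; have := sg; rewrite hg1 star1.
  have all0 : forall x : B, x = 0.
    by move=> x; rewrite -(wf_mul1l x) h10 wmul0l.
  by left => a; rewrite (all0 (Phi _)) (all0 (Phi a)) scaler0.
have Tm : forall x, T x = - x.
  move=> x; have h : x + T x = 0.
    by apply: I1; rewrite TD T2 scale1r addrC.
  by apply/eqP; rewrite -addr_eq0 addrC h.
pose U x := wf_mul g x.
have UN : forall x, U (- x) = - U x by move=> x; rewrite /U wmulNr.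
have UUm : forall x, U (U x) = - x by exact: Tm.
have UD : forall x y, U (x + y) = U x + U y by move=> x y; rewrite /U wf_mulDr.
have UZ : forall (k : CC) x, U (k *: x) = k *: U x by move=> k x; rewrite /U wf_mulZr.
have UL : forall x y, U (wf_mul x y) = wf_mul x (U y) by move=> x y; rewrite /U gL.
have UR : forall x y, U (wf_mul x y) = wf_mul (U x) y by move=> x y; rewrite /U gR.
have [I2|J2] := @wf_prime B (fun x => U x = 'i%C *: x) (fun x => U x = - 'i%C *: x)
  (@ideal_ok B U 'i%C UD UZ UL UR) (@ideal_ok B U (- 'i%C) UD UZ UL UR)
  (fun a b ha hb => @prod_zero B U 'i%C (- 'i%C) a b UL UR ni ha hb).
  right => a; rewrite -gPhi.
  change (U (Phi a) = - ('i%C *: Phi a)).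
  have h : Phi a - 'i%C *: U (Phi a) = 0.
    apply: I2; rewrite UD UN UZ UUm scalerN opprK scalerBr scalerA c2 scaleN1r opprK.
    by rewrite addrC.
  move/eqP: h; rewrite subr_eq0 => /eqP hy.
  by rewrite [in RHS]hy scalerA c2 scaleN1r opprK.
left => a; rewrite -gPhi.
change (U (Phi a) = 'i%C *: Phi a).
have h : Phi a + 'i%C *: U (Phi a) = 0.
  apply: J2; rewrite UD UZ UUm scalerDr scalerA mulNr c2 opprK scale1r scalerN.
  by rewrite addrC scaleNr.
move/eqP: h; rewrite addr_eq0 => /eqP hy.
by rewrite [in RHS]hy scalerN scalerA c2 scaleN1r opprK.
Qed.
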